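(* Each of the following maps of $(q_1,p_1,q_2,p_2,t,s;\alpha_1,\dots,\alpha_6)$ is a Bäcklund transformation of the Hamiltonian system with Hamiltonians $H'_1,H'_2$, i.e. it sends solutions of that system with parameters $(\alpha_1,\dots,\alpha_6)$ to solutions of the same system with the indicated new parameters: $u_1$: $(q_1+\frac{\alpha_2}{p_1},p_1,q_2,p_2,t,s;\alpha_1+\alpha_2,-\alpha_2,\alpha_3,\alpha_4,\alpha_5,\alpha_6)$; $u_2$: $(q_1,p_1,q_2+\frac{\alpha_4}{p_2},p_2,t,s;\alpha_1+\alpha_4,\alpha_2,\alpha_3,-\alpha_4,\alpha_5,\alpha_6)$; $u_3$: with $B=q_1p_1+q_2p_2$: $\big(\frac{q_1(B-\alpha_1)}{B-\alpha_1-\alpha_3},\frac{p_1(B-\alpha_1-\alpha_3)}{B-\alpha_1},\frac{q_2(B-\alpha_1)}{B-\alpha_1-\alpha_3},\frac{p_2(B-\alpha_1-\alpha_3)}{B-\alpha_1},t,s;\alpha_1+\alpha_3,\alpha_2,-\alpha_3,\alpha_4,\alpha_5,\alpha_6\big)$; $u_4$: with $C=(q_1-1)p_1+(q_2-1)p_2$: $\big(\frac{(q_1-1)q_1p_1+(q_2-1)q_1p_2-\alpha_1q_1-\alpha_5}{C-\alpha_1-\alpha_5},\frac{(C-\alpha_1-\alpha_5)p_1}{C-\alpha_1},\frac{(q_1-1)p_1q_2+(q_2-1)q_2p_2-\alpha_1q_2-\alpha_5}{C-\alpha_1-\alpha_5},\frac{(C-\alpha_1-\alpha_5)p_2}{C-\alpha_1},t,s;\alpha_1+\alpha_5,\alpha_2,\alpha_3,\alpha_4,-\alpha_5,\alpha_6\big)$;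 $u_5$: with $D=(q_1-t)p_1+(q_2-s)p_2$: $\big(\frac{(q_1-t)q_1p_1+(q_2-s)q_1p_2-\alpha_1q_1-\alpha_6t}{D-\alpha_1-\alpha_6},\frac{(D-\alpha_1-\alpha_6)p_1}{D-\alpha_1},\frac{(q_1-t)p_1q_2+(q_2-s)q_2p_2-\alpha_1q_2-\alpha_6s}{D-\alpha_1-\alpha_6},\frac{(D-\alpha_1-\alpha_6)p_2}{D-\alpha_1},t,s;\alpha_1+\alpha_6,\alpha_2,\alpha_3,\alpha_4,\alpha_5,-\alpha_6\big)$; $\varphi_1$: $\big(\frac1{q_1},-(q_1p_1+\alpha_2)q_1,\frac1{q_2},-(q_2p_2+\alpha_4)q_2,\frac1t,\frac1s;-\alpha_1-\alpha_2-\alpha_3-\alpha_4,\alpha_2,\alpha_3,\alpha_4,1-\alpha_6,1-\alpha_5\big)$; $\varphi_2$: $(1-q_1,-p_1,1-q_2,-p_2,1-t,1-s;\alpha_1,\alpha_2,\alpha_5,\alpha_4,\alpha_3,\alpha_6)$; $\varphi_3$: $\big(\frac{t-q_1}{t-1},-(t-1)p_1,\frac{s-q_2}{s-1},-(s-1)p_2,\frac{t}{t-1},\frac{s}{s-1};\alpha_1,\alpha_2,\alpha_6,\alpha_4,\alpha_5,\alpha_3\big)$; $\varphi_4$: $\big(\frac{q_1}{t},tp_1,\frac{q_2}{s},sp_2,\frac1t,\frac1s;\alpha_1,\alpha_2,\alpha_3,\alpha_4,\alpha_6,\alpha_5\big)$; $\varphi_5$: $(q_2,p_2,q_1,p_1,s,t;\alpha_1,\alpha_4,\alpha_3,\alpha_2,\alpha_5,\alpha_6)$;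 $\varphi_6$: $\big(\frac{q_1}{q_2},p_1q_2,\frac1{q_2},-(q_2p_2+q_1p_1-\alpha_1)q_2,\frac{t}{s},\frac1s;\alpha_1,\alpha_2,\alpha_4,\alpha_3,\alpha_5,\alpha_6\big)$; $\varphi_7$: $\big(\frac{t}{q_1},-\frac{(q_1p_1+\alpha_2)q_1}{t},\frac{s}{q_2},-\frac{(q_2p_2+\alpha_4)q_2}{s},t,s;-\alpha_1-\alpha_2-\alpha_3-\alpha_4,\alpha_2,\alpha_3,\alpha_4,1-\alpha_5,1-\alpha_6\big)$; $\varphi_8$: $\big(\frac{(q_1-1)t}{q_1-t},-\frac{p_1(q_1-t)^2+\alpha_2(q_1-t)}{t(t-1)},\frac{(q_2-1)s}{q_2-s},-\frac{p_2(q_2-s)^2+\alpha_4(q_2-s)}{s(s-1)},t,s;\alpha_1+\alpha_3+\alpha_5-1,\alpha_2,1-\alpha_3,\alpha_4,1-\alpha_5,\alpha_6\big)$.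
   Context: Parameters $\alpha_1,\dots,\alpha_6\in\mathbb{C}$ with $2\alpha_1+\alpha_2+\dots+\alpha_6=1$. $H_{VI}(q,p,t;a_0,a_1,a_2,a_3,a_4)=\frac{1}{t(t-1)}\big[p^2(q-t)(q-1)q-\{(a_0-1)(q-1)q+a_3(q-t)q+a_4(q-t)(q-1)\}p+a_2(a_1+a_2)(q-t)\big]$. The system is $dq_j=\frac{\partial H'_1}{\partial p_j}dt+\frac{\partial H'_2}{\partial p_j}ds$, $dp_j=-\frac{\partial H'_1}{\partial q_j}dt-\frac{\partial H'_2}{\partial q_j}ds$ ($j=1,2$), where $H'_1=H_{VI}(q_1,p_1,t;\alpha_1+\alpha_4+\alpha_6,-\alpha_1-\alpha_2,\alpha_2,\alpha_1+\alpha_5,\alpha_1+\alpha_3)+\alpha_2\Big\{\frac{(s-1)q_2}{(t-1)(t-s)}-\frac{sq_1}{t(t-s)}+\frac{q_1q_2}{t(t-1)}\Big\}p_2+\alpha_4\frac{(q_1-q_2)p_1}{t-s}+\Big\{\frac{2(s-1)q_1q_2}{(t-1)(t-s)}-\frac{tq_2^2+sq_1^2}{t(t-s)}+\frac{(q_1^2+t)q_2}{t(t-1)}\Big\}p_1p_2$, and $H'_2$ obtained from $H'_1$ by $q_1\leftrightarrow q_2$, $p_1\leftrightarrow p_2$, $t\leftrightarrow s$, $\alpha_2\leftrightarrow\alpha_4$. Each listed tuple gives the images of $(q_1,p_1,q_2,p_2,t,s;\alpha_1,\dots,\alpha_6)$ in this order. *)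

(* Defs.v *)
From HB Require Import structures.
From mathcomp Require Import all_boot all_order all_algebra.
From mathcomp Require Import mpoly.
Set Implicit Arguments. Unset Strict Implicit. Unset Printing Implicit Defensive.
Import Order.TTheory GRing.Theory.
Local Open Scope ring_scope.

Record prm (K : Type) := Prm { al1 : K; al2 : K; al3 : K; al4 : K; al5 : K; al6 : K }.
Record state (K : Type) := St { sq1 : K; sp1 : K; sq2 : K; sp2 : K; st : K; ss : K }.

Section Ham.
Variable K : fieldType.
Local Notation P := {mpoly K[4]}.

(* H_VI(x,y,t; a0,...,a4) as a polynomial in the "variables" x (=q), y (=p). *)
Definition HVI (x y : P) (t a0 a1 a2 a3 a4 : K) : P :=
  (1 / (t * (t - 1))) *:
   (y ^+ 2 * (x - t%:MP) * (x - 1) * x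
    - ((a0 - 1) *: ((x - 1) * x) + a3 *: ((x - t%:MP) * x)
       + a4 *: ((x - t%:MP) * (x - 1))) * y
    + (a2 * (a1 + a2)) *: (x - t%:MP)).

(* H'_1 written with generic (q1,p1,q2,p2) and (t,s), alpha_2, alpha_4 in
   explicit positions, so that H'_2 is obtained by the swaps
   q1<->q2, p1<->p2, t<->s, alpha_2<->alpha_4. *)
Definition Hgen (q1 p1 q2 p2 : P) (t s a1 a2 a3 a4 a5 a6 : K) : P :=
  HVI q1 p1 t (a1 + a4 + a6) (- a1 - a2) a2 (a1 + a5) (a1 + a3)
  + a2 *: (((s - 1) / ((t - 1) * (t - s))) *: q2
           - (s / (t * (t - s))) *: q1
           + (1 / (t * (t - 1))) *: (q1 * q2)) * p2
  + (a4 / (t - s)) *: ((q1 - q2) * p1)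
  + ((2 * (s - 1) / ((t - 1) * (t - s))) *: (q1 * q2)
     - (1 / (t * (t - s))) *: (t *: q2 ^+ 2 + s *: q1 ^+ 2)
     + (1 / (t * (t - 1))) *: ((q1 ^+ 2 + t%:MP) * q2)) * p1 * p2.

Definition iq1 : 'I_4 := inord 0.
Definition ip1 : 'I_4 := inord 1.
Definition iq2 : 'I_4 := inord 2.
Definition ip2 : 'I_4 := inord 3.

Definition H1 (t s : K) (a : prm K) : P :=
  Hgen 'X_iq1 'X_ip1 'X_iq2 'X_ip2 t s (al1 a) (al2 a) (al3 a) (al4 a) (al5 a) (al6 a).
Definition H2 (t s : K) (a : prm K) : P :=
  Hgen 'X_iq2 'X_ip2 'X_iq1 'X_ip1 s t (al1 a) (al4 a) (al3 a) (al2 a) (al5 a) (al6 a).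

Definition env (x : state K) : 'I_4 -> K :=
  fun i => nth 0 [:: sq1 x; sp1 x; sq2 x; sp2 x] i.

(* (q1,p1,q2,p2) (elements of a differential field with derivations dt = d/dt,
   ds = d/ds, independent variables t = st x, s = ss x) solve the system. *)
Definition sol (dt ds : K -> K) (x : state K) (a : prm K) : Prop :=
  let h1 := H1 (st x) (ss x) a in
  let h2 := H2 (st x) (ss x) a in
  let e := env x in
  [/\ dt (sq1 x) = (h1^`M(ip1)).@[e], ds (sq1 x) = (h2^`M(ip1)).@[e],
      dt (sq2 x) = (h1^`M(ip2)).@[e] & ds (sq2 x) = (h2^`M(ip2)).@[e]] /\
  [/\ dt (sp1 x) = - (h1^`M(iq1)).@[e], ds (sp1 x) = - (h2^`M(iq1)).@[e],
      dt (sp2 x) = - (h1^`M(iq2)).@[e] & ds (sp2 x) = - (h2^`M(iq2)).@[e]].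

Definition is_derivation (d : K -> K) : Prop :=
  (forall u v, d (u + v) = d u + d v) /\ (forall u v, d (u * v) = d u * v + u * d v).

(* Derivations d/dT, d/dS w.r.t. new independent variables T, S (elements of K),
   determined by the chain rule  d/dt = T_t d/dT + S_t d/dS,
   d/ds = T_s d/dT + S_s d/dS. *)
Definition jac (dt ds : K -> K) (T S : K) : K := dt T * ds S - dt S * ds T.
Definition newdT (dt ds : K -> K) (T S : K) (f : K) : K :=
  (ds S * dt f - dt S * ds f) / jac dt ds T S.
Definition newdS (dt ds : K -> K) (T S : K) (f : K) : K :=
  (dt T * ds f - ds T * dt f) / jac dt ds T S.

Definition is_constant (dt ds : K -> K) (c : K) : Prop := dt c = 0 /\ ds c = 0.

Definition param_rel (a : prm K) : Prop :=
  2 * al1 a + al2 a + al3 a + al4 a + al5 a + al6 a = 1.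

End Ham.

(* A map m (with nondegeneracy condition nd expressing that its denominators
   are nonzero) is a Backlund transformation: it sends every solution with
   parameters a to a solution (w.r.t. the new independent variables) with the
   new parameters. *)
Definition backlund
  (m : forall K : fieldType, state K -> prm K -> state K * prm K)
  (nd : forall K : fieldType, state K -> prm K -> Prop) : Prop :=
  forall (K : fieldType) (dt ds : K -> K) (x : state K) (a : prm K),
    is_derivation dt -> is_derivation ds ->
    dt (st x) = 1 -> ds (st x) = 0 -> dt (ss x) = 0 -> ds (ss x) = 1 ->
    is_constant dt ds (al1 a) -> is_constant dt ds (al2 a) ->
    is_constant dt ds (al3 a) -> is_constant dt ds (al4 a) ->
    is_constant dt ds (al5 a) -> is_constant dt ds (al6 a) ->
    param_rel a ->
    nd K x a ->
    sol dt ds x a ->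
    sol (newdT dt ds (st (m K x a).1) (ss (m K x a).1))
        (newdS dt ds (st (m K x a).1) (ss (m K x a).1)) (m K x a).1 (m K x a).2.

Section Maps.
Variable K : fieldType.
Implicit Types (x : state K) (a : prm K).

Definition u1 x a := (St (sq1 x + al2 a / sp1 x) (sp1 x) (sq2 x) (sp2 x) (st x) (ss x),
  Prm (al1 a + al2 a) (- al2 a) (al3 a) (al4 a) (al5 a) (al6 a)).
Definition nd_u1 x a := sp1 x != 0.

Definition u2 x a := (St (sq1 x) (sp1 x) (sq2 x + al4 a / sp2 x) (sp2 x) (st x) (ss x),
  Prm (al1 a + al4 a) (al2 a) (al3 a) (- al4 a) (al5 a) (al6 a)).
Definition nd_u2 x a := sp2 x != 0.

Definition Bf x := sq1 x * sp1 x + sq2 x * sp2 x.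
Definition u3 x a :=
  let B := Bf x in
  (St (sq1 x * (B - al1 a) / (B - al1 a - al3 a)) (sp1 x * (B - al1 a - al3 a) / (B - al1 a))
      (sq2 x * (B - al1 a) / (B - al1 a - al3 a)) (sp2 x * (B - al1 a - al3 a) / (B - al1 a))
      (st x) (ss x),
   Prm (al1 a + al3 a) (al2 a) (- al3 a) (al4 a) (al5 a) (al6 a)).
Definition nd_u3 x a := Bf x - al1 a - al3 a != 0 /\ Bf x - al1 a != 0.

Definition Cf x := (sq1 x - 1) * sp1 x + (sq2 x - 1) * sp2 x.
Definition u4 x a :=
  let C := Cf x in
  (St (((sq1 x - 1) * sq1 x * sp1 x + (sq2 x - 1) * sq1 x * sp2 x - al1 a * sq1 x - al5 a)
         / (C - al1 a - al5 a))
      ((C - al1 a - al5 a) * sp1 x / (C - al1 a))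
      (((sq1 x - 1) * sp1 x * sq2 x + (sq2 x - 1) * sq2 x * sp2 x - al1 a * sq2 x - al5 a)
         / (C - al1 a - al5 a))
      ((C - al1 a - al5 a) * sp2 x / (C - al1 a))
      (st x) (ss x),
   Prm (al1 a + al5 a) (al2 a) (al3 a) (al4 a) (- al5 a) (al6 a)).
Definition nd_u4 x a := Cf x - al1 a - al5 a != 0 /\ Cf x - al1 a != 0.

Definition Df x := (sq1 x - st x) * sp1 x + (sq2 x - ss x) * sp2 x.
Definition u5 x a :=
  let D := Df x in
  (St (((sq1 x - st x) * sq1 x * sp1 x + (sq2 x - ss x) * sq1 x * sp2 x - al1 a * sq1 x
          - al6 a * st x) / (D - al1 a - al6 a))
      ((D - al1 a - al6 a) * sp1 x / (D - al1 a))
      (((sq1 x - st x) * sp1 x * sq2 x + (sq2 x - ss x) * sq2 x * sp2 x - al1 a * sq2 x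
          - al6 a * ss x) / (D - al1 a - al6 a))
      ((D - al1 a - al6 a) * sp2 x / (D - al1 a))
      (st x) (ss x),
   Prm (al1 a + al6 a) (al2 a) (al3 a) (al4 a) (al5 a) (- al6 a)).
Definition nd_u5 x a := Df x - al1 a - al6 a != 0 /\ Df x - al1 a != 0.

Definition phi1 x a :=
  (St (1 / sq1 x) (- (sq1 x * sp1 x + al2 a) * sq1 x)
      (1 / sq2 x) (- (sq2 x * sp2 x + al4 a) * sq2 x)
      (1 / st x) (1 / ss x),
   Prm (- al1 a - al2 a - al3 a - al4 a) (al2 a) (al3 a) (al4 a) (1 - al6 a) (1 - al5 a)).
Definition nd_phi1 x (a : prm K) := sq1 x != 0 /\ sq2 x != 0.

Definition phi2 x a :=
  (St (1 - sq1 x) (- sp1 x) (1 - sq2 x) (- sp2 x) (1 - st x) (1 - ss x),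
   Prm (al1 a) (al2 a) (al5 a) (al4 a) (al3 a) (al6 a)).
Definition nd_phi2 (x : state K) (a : prm K) := True.

Definition phi3 x a :=
  (St ((st x - sq1 x) / (st x - 1)) (- (st x - 1) * sp1 x)
      ((ss x - sq2 x) / (ss x - 1)) (- (ss x - 1) * sp2 x)
      (st x / (st x - 1)) (ss x / (ss x - 1)),
   Prm (al1 a) (al2 a) (al6 a) (al4 a) (al5 a) (al3 a)).
Definition nd_phi3 (x : state K) (a : prm K) := True.

Definition phi4 x a :=
  (St (sq1 x / st x) (st x * sp1 x) (sq2 x / ss x) (ss x * sp2 x) (1 / st x) (1 / ss x),
   Prm (al1 a) (al2 a) (al3 a) (al4 a) (al6 a) (al5 a)).
Definition nd_phi4 (x : state K) (a : prm K) := True.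

Definition phi5 x a :=
  (St (sq2 x) (sp2 x) (sq1 x) (sp1 x) (ss x) (st x),
   Prm (al1 a) (al4 a) (al3 a) (al2 a) (al5 a) (al6 a)).
Definition nd_phi5 (x : state K) (a : prm K) := True.

Definition phi6 x a :=
  (St (sq1 x / sq2 x) (sp1 x * sq2 x) (1 / sq2 x)
      (- (sq2 x * sp2 x + sq1 x * sp1 x - al1 a) * sq2 x)
      (st x / ss x) (1 / ss x),
   Prm (al1 a) (al2 a) (al4 a) (al3 a) (al5 a) (al6 a)).
Definition nd_phi6 x (a : prm K) := sq2 x != 0.

Definition phi7 x a :=
  (St (st x / sq1 x) (- ((sq1 x * sp1 x + al2 a) * sq1 x) / st x)
      (ss x / sq2 x) (- ((sq2 x * sp2 x + al4 a) * sq2 x) / ss x)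
      (st x) (ss x),
   Prm (- al1 a - al2 a - al3 a - al4 a) (al2 a) (al3 a) (al4 a) (1 - al5 a) (1 - al6 a)).
Definition nd_phi7 x (a : prm K) := sq1 x != 0 /\ sq2 x != 0.

Definition phi8 x a :=
  (St ((sq1 x - 1) * st x / (sq1 x - st x))
      (- (sp1 x * (sq1 x - st x) ^+ 2 + al2 a * (sq1 x - st x)) / (st x * (st x - 1)))
      ((sq2 x - 1) * ss x / (sq2 x - ss x))
      (- (sp2 x * (sq2 x - ss x) ^+ 2 + al4 a * (sq2 x - ss x)) / (ss x * (ss x - 1)))
      (st x) (ss x),
   Prm (al1 a + al3 a + al5 a - 1) (al2 a) (1 - al3 a) (al4 a) (1 - al5 a) (al6 a)).
Definition nd_phi8 x (a : prm K) := sq1 x - st x != 0 /\ sq2 x - ss x != 0.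

End Maps.

(* Main.v *)
Require Import Defs.
From HB Require Import structures.
From mathcomp Require Import all_boot all_order all_algebra.
From mathcomp Require Import mpoly ring.
Set Implicit Arguments. Unset Strict Implicit. Unset Printing Implicit Defensive.
Import Order.TTheory GRing.Theory.
Local Open Scope ring_scope.

Section H.
Variable K : fieldType.
Local Notation P := {mpoly K[4]}.

Lemma mderivXi (i j : 'I_4) : ('X_i : P)^`M(j) = (i == j)%:R%:MP.
Proof.
rewrite mderivX mnm1E; case: eqP => [->|_].
  have -> : (U_(j) - U_(j) = 0)%MM by apply/mnmP => k; rewrite mnmBE subnn mnm0E.
  by rewrite mpolyX0 scale1r mpolyC1.
by rewrite scale0r mpolyC0.
Qed.

Lemma mderiv1 (j : 'I_4) : (1 : P)^`M(j) = 0.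
Proof. by rewrite -(mpolyC1) mderivC. Qed.

Definition hc (t : K) := 1 / (t * (t - 1)).
Definition HVIx (x y t a0 a1 a2 a3 a4 : K) : K :=
  hc t * (y ^+ 2 * ((x - 1) * x + (x - t) * x + (x - t) * (x - 1))
   - ((a0 - 1) * (2 * x - 1) + a3 * (2 * x - t) + a4 * (2 * x - t - 1)) * y + a2 * (a1 + a2)).
Definition HVIy (x y t a0 a1 a2 a3 a4 : K) : K :=
  hc t * (2 * y * (x - t) * (x - 1) * x
   - ((a0 - 1) * (x - 1) * x + a3 * (x - t) * x + a4 * (x - t) * (x - 1))).
Definition Lf (q1 q2 t s : K) :=
  (s - 1) / ((t - 1) * (t - s)) * q2 - s / (t * (t - s)) * q1 + hc t * (q1 * q2).
Definition Mf (q1 q2 t s : K) :=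
  2 * (s - 1) / ((t - 1) * (t - s)) * (q1 * q2)
  - 1 / (t * (t - s)) * (t * q2 ^+ 2 + s * q1 ^+ 2) + hc t * ((q1 ^+ 2 + t) * q2).
Definition Hq1 (q1 p1 q2 p2 t s a1 a2 a3 a4 a5 a6 : K) : K :=
  HVIx q1 p1 t (a1 + a4 + a6) (- a1 - a2) a2 (a1 + a5) (a1 + a3)
  + a2 * (- (s / (t * (t - s))) + hc t * q2) * p2 + a4 / (t - s) * p1
  + (2 * (s - 1) / ((t - 1) * (t - s)) * q2 - 1 / (t * (t - s)) * (s * (2 * q1))
     + hc t * (2 * q1 * q2)) * p1 * p2.
Definition Hp1 (q1 p1 q2 p2 t s a1 a2 a3 a4 a5 a6 : K) : K :=
  HVIy q1 p1 t (a1 + a4 + a6) (- a1 - a2) a2 (a1 + a5) (a1 + a3)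
  + a4 / (t - s) * (q1 - q2) + Mf q1 q2 t s * p2.
Definition Hq2 (q1 p1 q2 p2 t s a1 a2 a3 a4 a5 a6 : K) : K :=
  a2 * ((s - 1) / ((t - 1) * (t - s)) + hc t * q1) * p2 - a4 / (t - s) * p1
  + (2 * (s - 1) / ((t - 1) * (t - s)) * q1 - 1 / (t * (t - s)) * (t * (2 * q2))
     + hc t * (q1 ^+ 2 + t)) * p1 * p2.
Definition Hp2 (q1 p1 q2 p2 t s a1 a2 a3 a4 a5 a6 : K) : K :=
  a2 * Lf q1 q2 t s + Mf q1 q2 t s * p1.

Lemma dHgen (i0 i1 i2 i3 j : 'I_4) (v : 'I_4 -> K) t s a1 a2 a3 a4 a5 a6 :
  (Hgen 'X_i0 'X_i1 'X_i2 'X_i3 t s a1 a2 a3 a4 a5 a6)^`M(j).@[v] =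
  (i0 == j)%:R * Hq1 (v i0) (v i1) (v i2) (v i3) t s a1 a2 a3 a4 a5 a6
  + (i1 == j)%:R * Hp1 (v i0) (v i1) (v i2) (v i3) t s a1 a2 a3 a4 a5 a6
  + (i2 == j)%:R * Hq2 (v i0) (v i1) (v i2) (v i3) t s a1 a2 a3 a4 a5 a6
  + (i3 == j)%:R * Hp2 (v i0) (v i1) (v i2) (v i3) t s a1 a2 a3 a4 a5 a6.
Proof.
rewrite /Hgen /HVI !expr2.
rewrite !(mderivD, mderivB, mderivN, mderivM, mderivZ, mderivXi, mderivC, mderiv1).
rewrite !(mevalD, mevalB, mevalN, mevalM, mevalZ, mevalXU, mevalC, meval1, meval0).
rewrite /Hq1 /Hp1 /Hq2 /Hp2 /HVIx /HVIy /Lf /Mf /hc.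
ring.
Qed.

Section Der.
Variable d : K -> K.
Hypothesis hd : is_derivation d.
Lemma dD u v : d (u + v) = d u + d v. Proof. exact: hd.1. Qed.
Lemma dM u v : d (u * v) = d u * v + u * d v. Proof. exact: hd.2. Qed.
Lemma d0 : d 0 = 0.
Proof. by have := dD 0 0; rewrite addr0 => /eqP; rewrite -subr_eq subrr eq_sym => /eqP. Qed.
Lemma dN u : d (- u) = - d u.
Proof. by apply/eqP; rewrite -addr_eq0 -dD addNr d0. Qed.
Lemma d1 : d 1 = 0.
Proof. by have := dM 1 1; rewrite !mul1r mulr1 => /eqP; rewrite -subr_eq subrr eq_sym => /eqP. Qed.
Lemma dn n : d (n%:R) = 0.
Proof. by elim: n => [|n ih]; rewrite ?d0 // mulrS dD d1 ih addr0. Qed.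
Lemma dV u : d (u^-1) = - d u * u^-1 ^+ 2.
Proof.
have [->|u0] := eqVneq u 0; first by rewrite invr0 d0 expr0n /= mulr0.
have h := dM u u^-1; rewrite mulfV // d1 in h.
apply: (mulfI u0).
have -> : u * d u^-1 = - (d u * u^-1).
  by apply/eqP; rewrite -addr_eq0 addrC -h.
by field.
Qed.
Lemma dX u : d (u ^+ 2) = 2 * u * d u.
Proof. by rewrite expr2 dM; ring. Qed.
End Der.

Lemma envE (x : state K) :
  [/\ env x iq1 = sq1 x, env x ip1 = sp1 x, env x iq2 = sq2 x & env x ip2 = sp2 x].
Proof. by rewrite /env /iq1 /ip1 /iq2 /ip2 !inordK. Qed.

Lemma idxE : (iq1 == ip1) = false /\ (iq1 == iq2) = false /\ (iq1 == ip2) = false /\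
  (ip1 == iq1) = false /\ (ip1 == iq2) = false /\ (ip1 == ip2) = false /\
  (iq2 == iq1) = false /\ (iq2 == ip1) = false /\ (iq2 == ip2) = false /\
  (ip2 == iq1) = false /\ (ip2 == ip1) = false /\ (ip2 == iq2) = false.
Proof. by rewrite /iq1 /ip1 /iq2 /ip2; do !split; apply/negbTE; rewrite -val_eqE /= !inordK. Qed.

Lemma solE dt ds q1 p1 q2 p2 t s a1 a2 a3 a4 a5 a6 :
  sol dt ds (St q1 p1 q2 p2 t s) (Prm a1 a2 a3 a4 a5 a6) <->
  ([/\ dt q1 = Hp1 q1 p1 q2 p2 t s a1 a2 a3 a4 a5 a6,
       ds q1 = Hp2 q2 p2 q1 p1 s t a1 a4 a3 a2 a5 a6,
       dt q2 = Hp2 q1 p1 q2 p2 t s a1 a2 a3 a4 a5 a6 &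
       ds q2 = Hp1 q2 p2 q1 p1 s t a1 a4 a3 a2 a5 a6] /\
   [/\ dt p1 = - Hq1 q1 p1 q2 p2 t s a1 a2 a3 a4 a5 a6,
       ds p1 = - Hq2 q2 p2 q1 p1 s t a1 a4 a3 a2 a5 a6,
       dt p2 = - Hq2 q1 p1 q2 p2 t s a1 a2 a3 a4 a5 a6 &
       ds p2 = - Hq1 q2 p2 q1 p1 s t a1 a4 a3 a2 a5 a6]).
Proof.
have [e1 e2 e3 e4] := envE (St q1 p1 q2 p2 t s).
have [f1 [f2 [f3 [f4 [f5 [f6 [f7 [f8 [f9 [f10 [f11 f12]]]]]]]]]]] := idxE.
rewrite /sol /H1 /H2 /= !dHgen e1 e2 e3 e4 !eqxx f1 f2 f3 f4 f5 f6 f7 f8 f9 f10 f11 f12 /=.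
by rewrite !mul0r !mul1r !add0r !addr0.
Qed.
End H.

Ltac dsimp hd :=
  rewrite ?(dD hd, dN hd, dM hd, dV hd, dX hd, d1 hd, d0 hd, dn hd).

Lemma tne (K : fieldType) (dt ds : K -> K) t s : is_derivation dt -> is_derivation ds ->
  dt t = 1 -> ds t = 0 -> dt s = 0 -> ds s = 1 ->
  [/\ t != 0, t - 1 != 0, t - s != 0, s != 0 & (s - 1 != 0 /\ s - t != 0)].
Proof.
move=> hdt hds ht1 ht2 hs1 hs2.
have one0 : (1 : K) != 0 by exact: oner_neq0.
split; [| | | |split]; apply/eqP => h.
- by move: ht1; rewrite h (d0 hdt) => /eqP; rewrite eq_sym (negbTE one0).
- by have := dD hdt (t - 1) 1; rewrite subrK h (d0 hdt) (d1 hdt) addr0 ht1 => /eqP; rewrite (negbTE one0).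
- by have := dD hdt (t - s) s; rewrite subrK h (d0 hdt) hs1 addr0 ht1 => /eqP; rewrite (negbTE one0).
- by move: hs2; rewrite h (d0 hds) => /eqP; rewrite eq_sym (negbTE one0).
- by have := dD hds (s - 1) 1; rewrite subrK h (d0 hds) (d1 hds) addr0 hs2 => /eqP; rewrite (negbTE one0).
- by have := dD hds (s - t) t; rewrite subrK h (d0 hds) ht2 addr0 hs2 => /eqP; rewrite (negbTE one0).
Qed.



Lemma nz_eq (K : fieldType) (x y : K) : y != 0 -> x = y -> x != 0.
Proof. by move=> ? ->. Qed.
Lemma nz_opp (K : fieldType) (x y : K) : y != 0 -> x = - y -> x != 0.
Proof. by move=> ? ->; rewrite oppr_eq0. Qed.

Ltac nzc :=
  match goal with
  | |- is_true true => done
  | |- is_true (?e != 0) =>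
    first [ exact: oner_neq0
          | solve [apply: (nz_opp (oner_neq0 _)); ring]
          | solve [apply: (nz_eq (oner_neq0 _)); ring]
          | match goal with H : is_true (?y != 0) |- _ =>
              solve [apply: (nz_eq H); ring | apply: (nz_opp H); ring] end
          | match e with
            | _ * _ => apply: mulf_neq0; nzc
            | - _ => rewrite oppr_eq0; nzc
            | _ ^+ _ => apply: expf_neq0; nzc
            | _^-1 => rewrite invr_eq0; nzc
            end ]
  end.
Ltac nzs := repeat (apply/andP; split); nzc.

Lemma bu1 : backlund u1 nd_u1.
Proof.
move=> K dt ds [q1 p1 q2 p2 t s] [a1 a2 a3 a4 a5 a6] hdt hds /= ht1 ht2 hs1 hs2
    [c1t c1s] [c2t c2s] [c3t c3s] [c4t c4s] [c5t c5s] [c6t c6s] hrel hnd.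
have [n1 n2 n3 n4 [n5 n6]] := tne hdt hds ht1 ht2 hs1 hs2.
rewrite solE => -[[eq1 eq2 eq3 eq4] [eq5 eq6 eq7 eq8]].
rewrite /= solE /newdT /newdS /jac /Bf /Cf /Df /=.
dsimp hdt; dsimp hds.
rewrite ?ht1 ?ht2 ?hs1 ?hs2 ?c1t ?c1s ?c2t ?c2s ?c3t ?c3s ?c4t ?c4s ?c5t ?c5s ?c6t ?c6s
    ?eq1 ?eq2 ?eq3 ?eq4 ?eq5 ?eq6 ?eq7 ?eq8.
rewrite /param_rel /= in hrel.
have ha6 : a6 = 1 - 2 * a1 - a2 - a3 - a4 - a5 by rewrite -[X in X - 2 * a1]hrel; ring.
subst a6.
rewrite /Hq1 /Hp1 /Hq2 /Hp2 /HVIx /HVIy /Lf /Mf /hc.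
rewrite /nd_u1 /Bf /Cf /Df /= in hnd; try case: hnd => hnd hnd'.
split; split.
all: field.
all: nzs.
Qed.

Lemma bu2 : backlund u2 nd_u2.
Proof.
move=> K dt ds [q1 p1 q2 p2 t s] [a1 a2 a3 a4 a5 a6] hdt hds /= ht1 ht2 hs1 hs2
    [c1t c1s] [c2t c2s] [c3t c3s] [c4t c4s] [c5t c5s] [c6t c6s] hrel hnd.
have [n1 n2 n3 n4 [n5 n6]] := tne hdt hds ht1 ht2 hs1 hs2.
rewrite solE => -[[eq1 eq2 eq3 eq4] [eq5 eq6 eq7 eq8]].
rewrite /= solE /newdT /newdS /jac /Bf /Cf /Df /=.
dsimp hdt; dsimp hds.
rewrite ?ht1 ?ht2 ?hs1 ?hs2 ?c1t ?c1s ?c2t ?c2s ?c3t ?c3s ?c4t ?c4s ?c5t ?c5s ?c6t ?c6s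
    ?eq1 ?eq2 ?eq3 ?eq4 ?eq5 ?eq6 ?eq7 ?eq8.
rewrite /param_rel /= in hrel.
have ha6 : a6 = 1 - 2 * a1 - a2 - a3 - a4 - a5 by rewrite -[X in X - 2 * a1]hrel; ring.
subst a6.
rewrite /Hq1 /Hp1 /Hq2 /Hp2 /HVIx /HVIy /Lf /Mf /hc.
rewrite /nd_u2 /Bf /Cf /Df /= in hnd; try case: hnd => hnd hnd'.
split; split.
all: field.
all: nzs.
Qed.

Lemma bu3 : backlund u3 nd_u3.
Proof.
move=> K dt ds [q1 p1 q2 p2 t s] [a1 a2 a3 a4 a5 a6] hdt hds /= ht1 ht2 hs1 hs2
    [c1t c1s] [c2t c2s] [c3t c3s] [c4t c4s] [c5t c5s] [c6t c6s] hrel hnd.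
have [n1 n2 n3 n4 [n5 n6]] := tne hdt hds ht1 ht2 hs1 hs2.
rewrite solE => -[[eq1 eq2 eq3 eq4] [eq5 eq6 eq7 eq8]].
rewrite /= solE /newdT /newdS /jac /Bf /Cf /Df /=.
dsimp hdt; dsimp hds.
rewrite ?ht1 ?ht2 ?hs1 ?hs2 ?c1t ?c1s ?c2t ?c2s ?c3t ?c3s ?c4t ?c4s ?c5t ?c5s ?c6t ?c6s
    ?eq1 ?eq2 ?eq3 ?eq4 ?eq5 ?eq6 ?eq7 ?eq8.
rewrite /param_rel /= in hrel.
have ha6 : a6 = 1 - 2 * a1 - a2 - a3 - a4 - a5 by rewrite -[X in X - 2 * a1]hrel; ring.
subst a6.
rewrite /Hq1 /Hp1 /Hq2 /Hp2 /HVIx /HVIy /Lf /Mf /hc.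
rewrite /nd_u3 /Bf /Cf /Df /= in hnd; try case: hnd => hnd hnd'.
split; split.
all: field.
all: nzs.
Qed.

Lemma bu4 : backlund u4 nd_u4.
Proof.
move=> K dt ds [q1 p1 q2 p2 t s] [a1 a2 a3 a4 a5 a6] hdt hds /= ht1 ht2 hs1 hs2
    [c1t c1s] [c2t c2s] [c3t c3s] [c4t c4s] [c5t c5s] [c6t c6s] hrel hnd.
have [n1 n2 n3 n4 [n5 n6]] := tne hdt hds ht1 ht2 hs1 hs2.
rewrite solE => -[[eq1 eq2 eq3 eq4] [eq5 eq6 eq7 eq8]].
rewrite /= solE /newdT /newdS /jac /Bf /Cf /Df /=.
dsimp hdt; dsimp hds.
rewrite ?ht1 ?ht2 ?hs1 ?hs2 ?c1t ?c1s ?c2t ?c2s ?c3t ?c3s ?c4t ?c4s ?c5t ?c5s ?c6t ?c6s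
    ?eq1 ?eq2 ?eq3 ?eq4 ?eq5 ?eq6 ?eq7 ?eq8.
rewrite /param_rel /= in hrel.
have ha6 : a6 = 1 - 2 * a1 - a2 - a3 - a4 - a5 by rewrite -[X in X - 2 * a1]hrel; ring.
subst a6.
rewrite /Hq1 /Hp1 /Hq2 /Hp2 /HVIx /HVIy /Lf /Mf /hc.
rewrite /nd_u4 /Bf /Cf /Df /= in hnd; try case: hnd => hnd hnd'.
split; split.
all: field.
all: nzs.
Qed.

Lemma bu5 : backlund u5 nd_u5.
Proof.
move=> K dt ds [q1 p1 q2 p2 t s] [a1 a2 a3 a4 a5 a6] hdt hds /= ht1 ht2 hs1 hs2
    [c1t c1s] [c2t c2s] [c3t c3s] [c4t c4s] [c5t c5s] [c6t c6s] hrel hnd.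
have [n1 n2 n3 n4 [n5 n6]] := tne hdt hds ht1 ht2 hs1 hs2.
rewrite solE => -[[eq1 eq2 eq3 eq4] [eq5 eq6 eq7 eq8]].
rewrite /= solE /newdT /newdS /jac /Bf /Cf /Df /=.
dsimp hdt; dsimp hds.
rewrite ?ht1 ?ht2 ?hs1 ?hs2 ?c1t ?c1s ?c2t ?c2s ?c3t ?c3s ?c4t ?c4s ?c5t ?c5s ?c6t ?c6s
    ?eq1 ?eq2 ?eq3 ?eq4 ?eq5 ?eq6 ?eq7 ?eq8.
rewrite /param_rel /= in hrel.
have ha6 : a6 = 1 - 2 * a1 - a2 - a3 - a4 - a5 by rewrite -[X in X - 2 * a1]hrel; ring.
subst a6.
rewrite /Hq1 /Hp1 /Hq2 /Hp2 /HVIx /HVIy /Lf /Mf /hc.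
rewrite /nd_u5 /Bf /Cf /Df /= in hnd; try case: hnd => hnd hnd'.
split; split.
all: field.
all: nzs.
Qed.

Lemma bphi1 : backlund phi1 nd_phi1.
Proof.
move=> K dt ds [q1 p1 q2 p2 t s] [a1 a2 a3 a4 a5 a6] hdt hds /= ht1 ht2 hs1 hs2
    [c1t c1s] [c2t c2s] [c3t c3s] [c4t c4s] [c5t c5s] [c6t c6s] hrel hnd.
have [n1 n2 n3 n4 [n5 n6]] := tne hdt hds ht1 ht2 hs1 hs2.
rewrite solE => -[[eq1 eq2 eq3 eq4] [eq5 eq6 eq7 eq8]].
rewrite /= solE /newdT /newdS /jac /Bf /Cf /Df /=.
dsimp hdt; dsimp hds.
rewrite ?ht1 ?ht2 ?hs1 ?hs2 ?c1t ?c1s ?c2t ?c2s ?c3t ?c3s ?c4t ?c4s ?c5t ?c5s ?c6t ?c6s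
    ?eq1 ?eq2 ?eq3 ?eq4 ?eq5 ?eq6 ?eq7 ?eq8.
rewrite /param_rel /= in hrel.
have ha6 : a6 = 1 - 2 * a1 - a2 - a3 - a4 - a5 by rewrite -[X in X - 2 * a1]hrel; ring.
subst a6.
rewrite /Hq1 /Hp1 /Hq2 /Hp2 /HVIx /HVIy /Lf /Mf /hc.
rewrite /nd_phi1 /Bf /Cf /Df /= in hnd; try case: hnd => hnd hnd'.
split; split.
all: field.
all: nzs.
Qed.

Lemma bphi2 : backlund phi2 nd_phi2.
Proof.
move=> K dt ds [q1 p1 q2 p2 t s] [a1 a2 a3 a4 a5 a6] hdt hds /= ht1 ht2 hs1 hs2
    [c1t c1s] [c2t c2s] [c3t c3s] [c4t c4s] [c5t c5s] [c6t c6s] hrel hnd.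
have [n1 n2 n3 n4 [n5 n6]] := tne hdt hds ht1 ht2 hs1 hs2.
rewrite solE => -[[eq1 eq2 eq3 eq4] [eq5 eq6 eq7 eq8]].
rewrite /= solE /newdT /newdS /jac /Bf /Cf /Df /=.
dsimp hdt; dsimp hds.
rewrite ?ht1 ?ht2 ?hs1 ?hs2 ?c1t ?c1s ?c2t ?c2s ?c3t ?c3s ?c4t ?c4s ?c5t ?c5s ?c6t ?c6s
    ?eq1 ?eq2 ?eq3 ?eq4 ?eq5 ?eq6 ?eq7 ?eq8.
rewrite /param_rel /= in hrel.
have ha6 : a6 = 1 - 2 * a1 - a2 - a3 - a4 - a5 by rewrite -[X in X - 2 * a1]hrel; ring.
subst a6.
rewrite /Hq1 /Hp1 /Hq2 /Hp2 /HVIx /HVIy /Lf /Mf /hc.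
rewrite /nd_phi2 /Bf /Cf /Df /= in hnd; try case: hnd => hnd hnd'.
split; split.
all: field.
all: nzs.
Qed.

Lemma bphi3 : backlund phi3 nd_phi3.
Proof.
move=> K dt ds [q1 p1 q2 p2 t s] [a1 a2 a3 a4 a5 a6] hdt hds /= ht1 ht2 hs1 hs2
    [c1t c1s] [c2t c2s] [c3t c3s] [c4t c4s] [c5t c5s] [c6t c6s] hrel hnd.
have [n1 n2 n3 n4 [n5 n6]] := tne hdt hds ht1 ht2 hs1 hs2.
rewrite solE => -[[eq1 eq2 eq3 eq4] [eq5 eq6 eq7 eq8]].
rewrite /= solE /newdT /newdS /jac /Bf /Cf /Df /=.
dsimp hdt; dsimp hds.
rewrite ?ht1 ?ht2 ?hs1 ?hs2 ?c1t ?c1s ?c2t ?c2s ?c3t ?c3s ?c4t ?c4s ?c5t ?c5s ?c6t ?c6s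
    ?eq1 ?eq2 ?eq3 ?eq4 ?eq5 ?eq6 ?eq7 ?eq8.
rewrite /param_rel /= in hrel.
have ha6 : a6 = 1 - 2 * a1 - a2 - a3 - a4 - a5 by rewrite -[X in X - 2 * a1]hrel; ring.
subst a6.
rewrite /Hq1 /Hp1 /Hq2 /Hp2 /HVIx /HVIy /Lf /Mf /hc.
rewrite /nd_phi3 /Bf /Cf /Df /= in hnd; try case: hnd => hnd hnd'.
split; split.
all: field.
all: nzs.
Qed.

Lemma bphi4 : backlund phi4 nd_phi4.
Proof.
move=> K dt ds [q1 p1 q2 p2 t s] [a1 a2 a3 a4 a5 a6] hdt hds /= ht1 ht2 hs1 hs2
    [c1t c1s] [c2t c2s] [c3t c3s] [c4t c4s] [c5t c5s] [c6t c6s] hrel hnd.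
have [n1 n2 n3 n4 [n5 n6]] := tne hdt hds ht1 ht2 hs1 hs2.
rewrite solE => -[[eq1 eq2 eq3 eq4] [eq5 eq6 eq7 eq8]].
rewrite /= solE /newdT /newdS /jac /Bf /Cf /Df /=.
dsimp hdt; dsimp hds.
rewrite ?ht1 ?ht2 ?hs1 ?hs2 ?c1t ?c1s ?c2t ?c2s ?c3t ?c3s ?c4t ?c4s ?c5t ?c5s ?c6t ?c6s
    ?eq1 ?eq2 ?eq3 ?eq4 ?eq5 ?eq6 ?eq7 ?eq8.
rewrite /param_rel /= in hrel.
have ha6 : a6 = 1 - 2 * a1 - a2 - a3 - a4 - a5 by rewrite -[X in X - 2 * a1]hrel; ring.
subst a6.
rewrite /Hq1 /Hp1 /Hq2 /Hp2 /HVIx /HVIy /Lf /Mf /hc.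
rewrite /nd_phi4 /Bf /Cf /Df /= in hnd; try case: hnd => hnd hnd'.
split; split.
all: field.
all: nzs.
Qed.

Lemma bphi5 : backlund phi5 nd_phi5.
Proof.
move=> K dt ds [q1 p1 q2 p2 t s] [a1 a2 a3 a4 a5 a6] hdt hds /= ht1 ht2 hs1 hs2
    [c1t c1s] [c2t c2s] [c3t c3s] [c4t c4s] [c5t c5s] [c6t c6s] hrel hnd.
have [n1 n2 n3 n4 [n5 n6]] := tne hdt hds ht1 ht2 hs1 hs2.
rewrite solE => -[[eq1 eq2 eq3 eq4] [eq5 eq6 eq7 eq8]].
rewrite /= solE /newdT /newdS /jac /Bf /Cf /Df /=.
dsimp hdt; dsimp hds.
rewrite ?ht1 ?ht2 ?hs1 ?hs2 ?c1t ?c1s ?c2t ?c2s ?c3t ?c3s ?c4t ?c4s ?c5t ?c5s ?c6t ?c6s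
    ?eq1 ?eq2 ?eq3 ?eq4 ?eq5 ?eq6 ?eq7 ?eq8.
rewrite /param_rel /= in hrel.
have ha6 : a6 = 1 - 2 * a1 - a2 - a3 - a4 - a5 by rewrite -[X in X - 2 * a1]hrel; ring.
subst a6.
rewrite /Hq1 /Hp1 /Hq2 /Hp2 /HVIx /HVIy /Lf /Mf /hc.
rewrite /nd_phi5 /Bf /Cf /Df /= in hnd; try case: hnd => hnd hnd'.
split; split.
all: field.
all: nzs.
Qed.

Lemma bphi6 : backlund phi6 nd_phi6.
Proof.
move=> K dt ds [q1 p1 q2 p2 t s] [a1 a2 a3 a4 a5 a6] hdt hds /= ht1 ht2 hs1 hs2
    [c1t c1s] [c2t c2s] [c3t c3s] [c4t c4s] [c5t c5s] [c6t c6s] hrel hnd.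
have [n1 n2 n3 n4 [n5 n6]] := tne hdt hds ht1 ht2 hs1 hs2.
rewrite solE => -[[eq1 eq2 eq3 eq4] [eq5 eq6 eq7 eq8]].
rewrite /= solE /newdT /newdS /jac /Bf /Cf /Df /=.
dsimp hdt; dsimp hds.
rewrite ?ht1 ?ht2 ?hs1 ?hs2 ?c1t ?c1s ?c2t ?c2s ?c3t ?c3s ?c4t ?c4s ?c5t ?c5s ?c6t ?c6s
    ?eq1 ?eq2 ?eq3 ?eq4 ?eq5 ?eq6 ?eq7 ?eq8.
rewrite /param_rel /= in hrel.
have ha6 : a6 = 1 - 2 * a1 - a2 - a3 - a4 - a5 by rewrite -[X in X - 2 * a1]hrel; ring.
subst a6.
rewrite /Hq1 /Hp1 /Hq2 /Hp2 /HVIx /HVIy /Lf /Mf /hc.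
rewrite /nd_phi6 /Bf /Cf /Df /= in hnd; try case: hnd => hnd hnd'.
split; split.
all: field.
all: nzs.
Qed.

Lemma bphi7 : backlund phi7 nd_phi7.
Proof.
move=> K dt ds [q1 p1 q2 p2 t s] [a1 a2 a3 a4 a5 a6] hdt hds /= ht1 ht2 hs1 hs2
    [c1t c1s] [c2t c2s] [c3t c3s] [c4t c4s] [c5t c5s] [c6t c6s] hrel hnd.
have [n1 n2 n3 n4 [n5 n6]] := tne hdt hds ht1 ht2 hs1 hs2.
rewrite solE => -[[eq1 eq2 eq3 eq4] [eq5 eq6 eq7 eq8]].
rewrite /= solE /newdT /newdS /jac /Bf /Cf /Df /=.
dsimp hdt; dsimp hds.
rewrite ?ht1 ?ht2 ?hs1 ?hs2 ?c1t ?c1s ?c2t ?c2s ?c3t ?c3s ?c4t ?c4s ?c5t ?c5s ?c6t ?c6s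
    ?eq1 ?eq2 ?eq3 ?eq4 ?eq5 ?eq6 ?eq7 ?eq8.
rewrite /param_rel /= in hrel.
have ha6 : a6 = 1 - 2 * a1 - a2 - a3 - a4 - a5 by rewrite -[X in X - 2 * a1]hrel; ring.
subst a6.
rewrite /Hq1 /Hp1 /Hq2 /Hp2 /HVIx /HVIy /Lf /Mf /hc.
rewrite /nd_phi7 /Bf /Cf /Df /= in hnd; try case: hnd => hnd hnd'.
split; split.
all: field.
all: nzs.
Qed.

Lemma bphi8 : backlund phi8 nd_phi8.
Proof.
move=> K dt ds [q1 p1 q2 p2 t s] [a1 a2 a3 a4 a5 a6] hdt hds /= ht1 ht2 hs1 hs2
    [c1t c1s] [c2t c2s] [c3t c3s] [c4t c4s] [c5t c5s] [c6t c6s] hrel hnd.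
have [n1 n2 n3 n4 [n5 n6]] := tne hdt hds ht1 ht2 hs1 hs2.
rewrite solE => -[[eq1 eq2 eq3 eq4] [eq5 eq6 eq7 eq8]].
rewrite /= solE /newdT /newdS /jac /Bf /Cf /Df /=.
dsimp hdt; dsimp hds.
rewrite ?ht1 ?ht2 ?hs1 ?hs2 ?c1t ?c1s ?c2t ?c2s ?c3t ?c3s ?c4t ?c4s ?c5t ?c5s ?c6t ?c6s
    ?eq1 ?eq2 ?eq3 ?eq4 ?eq5 ?eq6 ?eq7 ?eq8.
rewrite /param_rel /= in hrel.
have ha6 : a6 = 1 - 2 * a1 - a2 - a3 - a4 - a5 by rewrite -[X in X - 2 * a1]hrel; ring.
subst a6.
rewrite /Hq1 /Hp1 /Hq2 /Hp2 /HVIx /HVIy /Lf /Mf /hc.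
rewrite /nd_phi8 /Bf /Cf /Df /= in hnd; try case: hnd => hnd hnd'.
split; split.
all: field.
all: nzs.
Qed.

Theorem mainTheorem9 :
  [/\ backlund u1 nd_u1, backlund u2 nd_u2, backlund u3 nd_u3,
      backlund u4 nd_u4 & backlund u5 nd_u5] /\
  [/\ backlund phi1 nd_phi1, backlund phi2 nd_phi2, backlund phi3 nd_phi3 &
      backlund phi4 nd_phi4] /\
  [/\ backlund phi5 nd_phi5, backlund phi6 nd_phi6,
      backlund phi7 nd_phi7 & backlund phi8 nd_phi8].
Proof.
split; [split; [exact: bu1|exact: bu2|exact: bu3|exact: bu4|exact: bu5]|split].
- by split; [exact: bphi1|exact: bphi2|exact: bphi3|exact: bphi4].
- by split; [exact: bphi5|exact: bphi6|exact: bphi7|exact: bphi8].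
Qed.
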